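(* Let $H$ be a graph, $K$ a clique of $H$, and $x$ a vertex of $H$ not in $K$ that is adjacent to all vertices of $K$, such that all vertices of $K$ have the same closed neighborhood in $H-x$. For $0\le i\le |K|$, let $H_i$ be the graph obtained from $H$ by removing $i$ of the edges between $x$ and $K$. Then \[ (i-j)X_{H_k}+(j-k)X_{H_i}+(k-i)X_{H_j}=0\qquad\text{for any } 0\le i\le j\le k\le |K|. \]
   Context: All graphs are finite simple graphs. The chromatic symmetric function of a graph $G$ is $X_G=\sum_{\kappa}\prod_{v\in V(G)}x_{\kappa(v)}$, where $\kappa$ ranges over proper colorings $\kappa:V(G)\to\{1,2,\dots\}$. A clique is a set of pairwise adjacent vertices. The closed neighborhood of a vertex is the set consisting of the vertex and all vertices adjacent to it. *)

(* Defs.v *)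
From HB Require Import structures.
From mathcomp Require Import all_boot all_algebra.
From mathcomp Require Import mpoly.
Set Implicit Arguments. Unset Strict Implicit. Unset Printing Implicit Defensive.
Import GRing.Theory.
Local Open Scope ring_scope.

(* A finite simple graph: vertex type T : finType, edge relation e : rel T,
   required to be symmetric and irreflexive (hypotheses of the theorem). *)

Definition proper_col (T : finType) (e : rel T) (n : nat) (k : {ffun T -> 'I_n}) : bool :=
  [forall u, forall v, e u v ==> (k u != k v)].

(* The chromatic symmetric function X_G truncated to the variables x_1..x_n,
   i.e. X_G(x_1,...,x_n,0,0,...) : the sum over proper colourings
   kappa : V -> {1..n} of prod_v x_{kappa v}.  Two symmetric functions are
   equal iff all these truncations are equal. *)
Definition csf (T : finType) (e : rel T) (n : nat) : {mpoly int[n]} :=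
  \sum_(k : {ffun T -> 'I_n} | proper_col e k) \prod_(v : T) 'X_(k v).

Definition remove_edges (T : finType) (e : rel T) (x : T) (S : {set T}) : rel T :=
  fun u v => e u v && ~~ (((u == x) && (v \in S)) || ((v == x) && (u \in S))).

(* Main.v *)
Require Import Defs.
From HB Require Import structures.
From mathcomp Require Import all_boot all_algebra.
From mathcomp Require Import mpoly.
From mathcomp Require Import fingroup perm ring.
Import GRing.Theory.
Local Open Scope ring_scope.

Lemma proper_split (T : finType) (e : rel T) (x : T) (K S : {set T}) n
  (k : {ffun T -> 'I_n})
  (xK : x \notin K) (x_adj : forall v, v \in K -> e x v) (hS : S \subset K) :
  proper_col (remove_edges e x S) k =
  proper_col (remove_edges e x K) k && [forall v in K :\: S, k v != k x].
Proof.
rewrite /proper_col /remove_edges; apply/idP/andP.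
- move=> /forallP H; split.
  + apply/forallP=> a; apply/forallP=> b; apply/implyP=> /andP[eab hn].
    move: (forallP (H a) b) => /implyP; apply; rewrite eab /=.
    apply: contra hn; case/orP=> /andP[-> /(subsetP hS) ->]; by rewrite ?orbT.
  + apply/forallP=> v; apply/implyP; rewrite inE => /andP[vS vK].
    have vx : (v == x) = false by apply/eqP=> vx; rewrite -vx vK in xK.
    move: (forallP (H x) v) => /implyP; rewrite eqxx (negbTE vS) vx x_adj //=.
    by rewrite eq_sym; apply.
- case=> /forallP H1 /forallP H2; apply/forallP=> a; apply/forallP=> b.
  apply/implyP=> /andP[eab hn].
  case h0: ((a == x) && (b \in K) || (b == x) && (a \in K)).
  + case/orP: h0 => /andP[/eqP ax bK].
    * subst a.
      have bS : b \notin S by apply: contra hn => bS; rewrite eqxx bS.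
      by move: (H2 b); rewrite inE bS bK /= eq_sym.
    * subst b.
      have aS : a \notin S by apply: contra hn => aS; rewrite eqxx aS orbT.
      by move: (H2 a); rewrite inE aS bK /=.
  + by move: (forallP (H1 a) b) => /implyP; apply; rewrite eab h0.
Qed.

Lemma count_lem (T : finType) (V : zmodType) (m : V) (x : T) (K S : {set T}) n
  (k : {ffun T -> 'I_n}) (hS : S \subset K)
  (inj : forall u v, u \in K -> v \in K -> u != v -> k u != k v) :
  (if [forall v in K :\: S, k v != k x] then m else 0) =
  (if [forall v in K, k v != k x] then m else 0) +
  \sum_(v in S) (if k v == k x then m else 0).
Proof.
case: (pickP [pred v in K | k v == k x]) => [v0 /andP[v0K /eqP hv0] | hnone].
- have uq : forall v, v \in K -> (k v == k x) = (v == v0).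
    move=> v vK; apply/eqP/eqP => [h|->//].
    case: (eqVneq v v0) => // hne.
    by have := inj v v0 vK v0K hne; rewrite h hv0 eqxx.
  have -> : [forall v in K, k v != k x] = false.
    by apply/forallP => /(_ v0); rewrite v0K hv0 eqxx.
  have -> : [forall v in K :\: S, k v != k x] = (v0 \in S).
    apply/forallP/idP.
    + by move/(_ v0); rewrite inE v0K hv0 eqxx; case: (v0 \in S).
    + move=> v0S v; apply/implyP; rewrite inE => /andP[vS vK].
      rewrite (uq v vK); apply: contra vS; by move/eqP->.
  rewrite add0r (eq_bigr (fun v => if v == v0 then m else 0)); last first.
    by move=> v vS; rewrite (uq v (subsetP hS v vS)).
  case v0S: (v0 \in S).
  + rewrite (bigD1 v0) //= eqxx big1 ?addr0 // => v /andP[_ /negbTE->] //.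
  + rewrite big1 // => v vS; case: eqP => // vv0.
    by rewrite -vv0 vS in v0S.
- have -> : [forall v in K, k v != k x].
    apply/forallP=> v; apply/implyP=> vK; move: (hnone v) => /=.
    by rewrite vK /= => ->.
  have -> : [forall v in K :\: S, k v != k x].
    apply/forallP=> v; apply/implyP; rewrite inE => /andP[_ vK]; move: (hnone v) => /=.
    by rewrite vK /= => ->.
  rewrite big1 ?addr0 // => v vS; have := hnone v.
  by rewrite /= (subsetP hS v vS) /= => ->.
Qed.
Definition mono {T : finType} {n} (k : {ffun T -> 'I_n}) : {mpoly int[n]} :=
  \prod_(v : T) 'X_(k v).

Lemma decomp (T : finType) (e : rel T) (x : T) (K S : {set T}) n
  (xK : x \notin K) (x_adj : forall v, v \in K -> e x v) (hS : S \subset K)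
  (K_clique : forall u v, u \in K -> v \in K -> u != v -> e u v) :
  csf (remove_edges e x S) n =
  \sum_(k : {ffun T -> 'I_n} | proper_col (remove_edges e x K) k &&
         [forall v in K, k v != k x]) mono k +
  \sum_(v in S) \sum_(k : {ffun T -> 'I_n} | proper_col (remove_edges e x K) k &&
         (k v == k x)) mono k.
Proof.
rewrite /csf (eq_bigl _ _ (fun k => @proper_split _ e x K S n k xK x_adj hS)).
rewrite big_mkcondr.
rewrite [X in _ = X + _]big_mkcondr.

under [X in _ = _ + X]eq_bigr do rewrite big_mkcondr.
rewrite [X in _ = _ + X]exchange_big -big_split /=.
apply: eq_bigr => k Pk; apply: count_lem => // u v uK vK uv.
have xu : (u == x) = false by apply/eqP=> h; rewrite -h uK in xK.
have xv : (v == x) = false by apply/eqP=> h; rewrite -h vK in xK.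
move/forallP: Pk => /(_ u) /forallP /(_ v) /implyP; apply.
by rewrite /remove_edges K_clique // xu xv.
Qed.

Lemma e0_inv (T : finType) (e : rel T)
  (e_sym : forall u v, e u v = e v u) (e_irr : irreflexive e)
  (K : {set T}) (x : T) (xK : x \notin K)
  (K_nbhd : forall u v, u \in K -> v \in K ->
     forall w, w != x -> ((w == u) || e u w) = ((w == v) || e v w))
  u v (uK : u \in K) (vK : v \in K) a b :
  remove_edges e x K (tperm u v a) (tperm u v b) = remove_edges e x K a b.
Proof.
have xu : x != u by apply/eqP=> h; rewrite h uK in xK.
have xv : x != v by apply/eqP=> h; rewrite h vK in xK.
have sx : tperm u v x = x by rewrite tpermD // eq_sym.
have memK : forall c, (tperm u v c \in K) = (c \in K).
  by move=> c; case: (tpermP u v c) => [->|->|_ _]; rewrite ?uK ?vK.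
have eqx : forall c, (tperm u v c == x) = (c == x).
  by move=> c; rewrite -{1}sx (inj_eq perm_inj).
rewrite /remove_edges !memK !eqx.
case h: ((a == x) && (b \in K) || (b == x) && (a \in K)); rewrite ?andbF //=.
have nb : forall w, w != u -> w != v -> w != x -> e u w = e v w.
  move=> w wu wv wx; have := K_nbhd u v uK vK w wx.
  by rewrite (negbTE wu) (negbTE wv).
case: (eqVneq a x) => [ax|ax].
  subst a; rewrite sx; move: h; rewrite eqxx /= => /norP[/negbTE bK _].
  by case: (tpermP u v b) => // bu; [rewrite bu uK in bK | rewrite bu vK in bK].
case: (eqVneq b x) => [bx|bx].
  subst b; rewrite sx; move: h; rewrite eqxx /= andbT => /norP[_ /negbTE aK].
  by case: (tpermP u v a) => [au|au|_ _]; [rewrite au uK in aK | rewrite au vK in aK| rewrite andbT].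
rewrite !andbT.
case: (tpermP u v a) => [->|->|au av]; case: (tpermP u v b) => [->|->|bu bv];
  rewrite ?e_irr // 1?e_sym //.
- by rewrite (e_sym b v) (nb b) //; apply/eqP.
- by rewrite (e_sym b u) (nb b) //; apply/eqP.
- by rewrite (e_sym a u) (nb a) //; apply/eqP.
- by rewrite (e_sym a v) (nb a) //; apply/eqP.
Qed.

Lemma lin (V : lmodType int) (A B : V) (i j k : int) :
  (i - j) *: (A + k *: B) + (j - k) *: (A + i *: B) + (k - i) *: (A + j *: B) = 0.
Proof.
rewrite !scalerDr !scalerA (addrACA ((i - j) *: A)) (addrACA ((i - j) *: A + (j - k) *: A)) -!scalerDl.
have -> : i - j + (j - k) + (k - i) = 0 by ring.
have -> : (i - j) * k + (j - k) * i + (k - i) * j = 0 by ring.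
by rewrite !scale0r addr0.
Qed.

Lemma B_inv (T : finType) (e : rel T)
  (e_sym : forall u v, e u v = e v u) (e_irr : irreflexive e)
  (K : {set T}) (x : T) (xK : x \notin K)
  (K_nbhd : forall u v, u \in K -> v \in K ->
     forall w, w != x -> ((w == u) || e u w) = ((w == v) || e v w))
  u v (uK : u \in K) (vK : v \in K) n :
  \sum_(k : {ffun T -> 'I_n} | proper_col (remove_edges e x K) k && (k u == k x)) mono k =
  \sum_(k : {ffun T -> 'I_n} | proper_col (remove_edges e x K) k && (k v == k x)) mono k.
Proof.
have xu : x != u by apply/eqP=> h; rewrite h uK in xK.
have xv : x != v by apply/eqP=> h; rewrite h vK in xK.
have sx : tperm u v x = x by rewrite tpermD // eq_sym.
pose f (k : {ffun T -> 'I_n}) := [ffun w => k (tperm u v w)].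
have fK : involutive f by move=> k; apply/ffunP=> w; rewrite !ffunE tpermK.
have pf : forall k, proper_col (remove_edges e x K) k ->
    proper_col (remove_edges e x K) (f k).
  move=> k /forallP H; apply/forallP=> a; apply/forallP=> b; apply/implyP=> eab.
  rewrite !ffunE; move: (forallP (H (tperm u v a)) (tperm u v b)) => /implyP; apply.
  by rewrite (@e0_inv _ e e_sym e_irr K x xK K_nbhd u v uK vK).
have pfE : forall k, proper_col (remove_edges e x K) (f k) =
    proper_col (remove_edges e x K) k.
  by move=> k; apply/idP/idP => [/pf|/pf//]; rewrite fK.
rewrite (reindex_inj (inv_inj fK)) /=.
apply: eq_big => k.
  by rewrite pfE !ffunE tpermL sx.
move=> _; rewrite /mono [RHS](reindex_inj (@perm_inj _ (tperm u v))) /=.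
by apply: eq_bigr => w _; rewrite ffunE.
Qed.

Theorem corollary2p4 (T : finType) (e : rel T)
  (e_sym : forall u v, e u v = e v u) (e_irr : irreflexive e)
  (K : {set T}) (x : T)
  (K_clique : forall u v, u \in K -> v \in K -> u != v -> e u v)
  (xK : x \notin K)
  (x_adj : forall v, v \in K -> e x v)
  (K_nbhd : forall u v, u \in K -> v \in K ->
     forall w, w != x -> ((w == u) || e u w) = ((w == v) || e v w))
  (i j k : nat) (hij : (i <= j)%N) (hjk : (j <= k)%N) (hk : (k <= #|K|)%N)
  (Si Sj Sk : {set T})
  (hSi : Si \subset K) (hSj : Sj \subset K) (hSk : Sk \subset K)
  (cSi : #|Si| = i) (cSj : #|Sj| = j) (cSk : #|Sk| = k)
  (n : nat) :
  ((i%:Z - j%:Z) *: csf (remove_edges e x Sk) n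
   + (j%:Z - k%:Z) *: csf (remove_edges e x Si) n
   + (k%:Z - i%:Z) *: csf (remove_edges e x Sj) n) = 0.
Proof.
case: (set_0Vmem K) => [K0 | [u uK]].
  move: hk; rewrite K0 cards0 leqn0 => /eqP k0.
  have j0 : j = 0%N by apply/eqP; rewrite -leqn0 -k0.
  have i0 : i = 0%N by apply/eqP; rewrite -leqn0 -j0.
  by rewrite i0 j0 k0 subrr !scale0r !addr0.
set A := \sum_(k : {ffun T -> 'I_n} | proper_col (remove_edges e x K) k &&
         [forall v in K, k v != k x]) mono k.
set B := \sum_(k : {ffun T -> 'I_n} | proper_col (remove_edges e x K) k &&
         (k u == k x)) mono k.
have E : forall S : {set T}, S \subset K -> csf (remove_edges e x S) n = A + (#|S|%:Z) *: B.
  move=> S hS; rewrite (@decomp _ e x K S n xK x_adj hS K_clique) -natz scaler_nat -sumr_const.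
  congr (_ + _); apply: eq_bigr => v vS.
  by symmetry; apply: (@B_inv _ e e_sym e_irr K x xK K_nbhd u v uK (subsetP hS v vS)).
by rewrite !E // cSi cSj cSk lin.
Qed.
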